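(* Let $G=(V,E,\omega)\in\mathcal G$, $\gamma\geq0$, and $\tau>0$. If $S^0\subset V$ and $\{S^k\}_{k=1}^N$ ($N\in\mathbb N\cup\{\infty\}$) is a sequence generated by the OKMBO scheme, then there is $K\geq0$ such that $S^k=S^K$ for all $k\geq K$.
   Context: $\mathcal{G}$ is the set of finite, simple, connected, undirected, edge-weighted graphs $G=(V,E,\omega)$ with $V=\{1,\dots,n\}$, $n\geq2$, weights $\omega_{ij}=\omega_{ji}>0$ on edges, $0$ otherwise. $d_i=\sum_j\omega_{ij}$. $\mathcal V$: functions $V\to\mathbb R$. Fixed $r\in[0,1]$: $(\Delta u)_i=d_i^{-r}\sum_j\omega_{ij}(u_i-u_j)$, $\mathcal M(u)=\sum_id_i^ru_i$, $\mathcal A(u)=\frac{\mathcal M(u)}{\sum_id_i^r}\chi_V$ ($\chi_S$ indicator of $S$). For $u\in\mathcal V$ let $\varphi$ be the unique solution of $\Delta\varphi=u-\mathcal A(u)$, $\mathcal M(\varphi)=0$, and $Lu:=\Delta u+\gamma\varphi$. OKMBO scheme: given $S^0\subset V$, for $k=1,\dots,N$ let $u=e^{-\tau L}\chi_{S^{k-1}}$ (the time-$\tau$ solution of $du/dt=-Lu$, $u(0)=\chi_{S^{k-1}}$) and $S^k=\{i\in V:u_i\geq\frac12\}$. *)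

(* Defs.v *)
From HB Require Import structures.
From mathcomp Require Import all_boot all_order all_algebra.
From mathcomp Require Import all_classical all_reals all_analysis.
Set Implicit Arguments. Unset Strict Implicit. Unset Printing Implicit Defensive.
Import Order.TTheory GRing.Theory Num.Theory.
Import numFieldNormedType.Exports.
Local Open Scope ring_scope.

(* Vertices V = {1..n} are represented by 'I_n; functions V -> R by row
   vectors 'rV[R]_n (entry u 0 i); weights by w : 'I_n -> 'I_n -> R. *)

Section OKMBO.
Variables (R : realType) (n : nat).

Definition edge (w : 'I_n -> 'I_n -> R) : rel 'I_n := fun i j => 0 < w i j.

Definition is_weighted_graph (w : 'I_n -> 'I_n -> R) : Prop :=
  (2 <= n)%N /\
  (forall i j, w i j = w j i) /\
  (forall i j, 0 <= w i j) /\
  (forall i, w i i = 0) /\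
  (forall i j, connect (edge w) i j).

Definition deg (w : 'I_n -> 'I_n -> R) (i : 'I_n) : R := \sum_j w i j.

Definition lap (r : R) (w : 'I_n -> 'I_n -> R) (u : 'rV[R]_n) : 'rV[R]_n :=
  \row_i (powR (deg w i) (- r) * \sum_j w i j * (u 0 i - u 0 j)).

Definition mass (r : R) (w : 'I_n -> 'I_n -> R) (u : 'rV[R]_n) : R :=
  \sum_i powR (deg w i) r * u 0 i.

Definition avg (r : R) (w : 'I_n -> 'I_n -> R) (u : 'rV[R]_n) : 'rV[R]_n :=
  \row_i (mass r w u / \sum_j powR (deg w j) r).

(* phi solves  Delta phi = u - A(u),  M(phi) = 0  (unique on connected G) *)
Definition is_phi (r : R) (w : 'I_n -> 'I_n -> R) (u phi : 'rV[R]_n) : Prop :=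
  lap r w phi = u - avg r w u /\ mass r w phi = 0.

Definition chi (S : {set 'I_n}) : 'rV[R]_n :=
  \row_i (if i \in S then 1 else 0).

Definition okmbo_step (r gamma tau : R) (w : 'I_n -> 'I_n -> R)
    (S S' : {set 'I_n}) : Prop :=
  exists u : R -> 'rV[R]_n,
    u 0 = chi S /\
    (forall t : R, exists phi : 'rV[R]_n,
        is_phi r w (u t) phi /\
        is_derive t 1 u (- (lap r w (u t) + gamma *: phi))) /\
    S' = [set i | 2^-1 <= u tau 0 i].

End OKMBO.

(* Main.v *)
Require Import Defs.
From HB Require Import structures.
From mathcomp Require Import all_boot all_order all_algebra.
From mathcomp Require Import all_classical all_reals all_analysis.
From mathcomp Require Import ring lra.
Set Implicit Arguments. Unset Strict Implicit. Unset Printing Implicit Defensive.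
Import Order.TTheory GRing.Theory Num.Theory.
Import numFieldNormedType.Exports.
Local Open Scope ring_scope.

Definition ip (R : realType) n (r : R) (w : 'I_n -> 'I_n -> R) (u v : 'rV[R]_n) : R :=
  \sum_i powR (deg w i) r * (u 0 i * v 0 i).

Lemma ipC (R : realType) n (r : R) w (u v : 'rV[R]_n) : ip r w u v = ip r w v u.
Proof. by apply: eq_bigr => i _; rewrite [u 0 i * _]mulrC. Qed.

Lemma ipDr (R : realType) n (r : R) w (u v1 v2 : 'rV[R]_n) :
  ip r w u (v1 + v2) = ip r w u v1 + ip r w u v2.
Proof. by rewrite /ip -big_split; apply: eq_bigr => i _; rewrite !mxE /=; ring. Qed.

Lemma ipBr (R : realType) n (r : R) w (u v1 v2 : 'rV[R]_n) :
  ip r w u (v1 - v2) = ip r w u v1 - ip r w u v2.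
Proof. by rewrite /ip -sumrB; apply: eq_bigr => i _; rewrite !mxE; rewrite /=; ring. Qed.

Lemma ipNr (R : realType) n (r : R) w (u v : 'rV[R]_n) :
  ip r w u (- v) = - ip r w u v.
Proof. by rewrite /ip -sumrN; apply: eq_bigr => i _; rewrite !mxE; rewrite /=; ring. Qed.

Lemma ipZr (R : realType) n (r : R) w (u v : 'rV[R]_n) k :
  ip r w u (k *: v) = k * ip r w u v.
Proof. by rewrite /ip mulr_sumr; apply: eq_bigr => i _; rewrite !mxE; rewrite /=; ring. Qed.

Lemma ip_avg (R : realType) n (r : R) w (x u : 'rV[R]_n) :
  ip r w x (avg r w u) = mass r w x * (mass r w u / \sum_j powR (deg w j) r).
Proof. by rewrite /ip /mass mulr_suml; apply: eq_bigr => i _; rewrite !mxE /mass; ring. Qed.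

Lemma lap_sa (R : realType) n (r : R) (w : 'I_n -> 'I_n -> R) (u v : 'rV[R]_n) :
  (forall i, 0 < deg w i) -> (forall i j, w i j = w j i) ->
  ip r w (lap r w u) v = ip r w u (lap r w v).
Proof.
move=> dpos wsym.
have E : forall (x y : 'rV[R]_n), ip r w (lap r w x) y =
    \sum_i \sum_j (w i j * x 0 i * y 0 i - w i j * x 0 j * y 0 i).
  move=> x y; rewrite /ip; apply: eq_bigr => i _; rewrite !mxE.
  rewrite mulrA mulrA powRN mulfV ?gt_eqF ?powR_gt0 // mul1r mulr_suml.
  by apply: eq_bigr => j _; ring.
rewrite [ip r w u _]ipC E E; apply/eqP; rewrite -subr_eq0 -sumrB; apply/eqP.
under eq_bigr do rewrite -sumrB.
have S2 : \sum_i \sum_j w i j * u 0 j * v 0 i = \sum_i \sum_j w i j * v 0 j * u 0 i.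
  rewrite exchange_big /=; apply: eq_bigr => i _; apply: eq_bigr => j _.
  by rewrite wsym; ring.
rewrite -[RHS](subrr (\sum_i \sum_j w i j * u 0 j * v 0 i)).
rewrite {1}S2 -sumrB; apply: eq_bigr => i _; rewrite -sumrB; apply: eq_bigr => j _.
ring.
Qed.

Lemma phi_sa (R : realType) n (r : R) (w : 'I_n -> 'I_n -> R) (u v pu pv : 'rV[R]_n) :
  (forall i, 0 < deg w i) -> (forall i j, w i j = w j i) ->
  is_phi r w u pu -> is_phi r w v pv -> ip r w pu v = ip r w u pv.
Proof.
move=> dpos wsym [hu mu] [hv mv].
have -> : v = lap r w pv + avg r w v by rewrite hv subrK.
have -> : u = lap r w pu + avg r w u by rewrite hu subrK.
rewrite ipDr ip_avg mu mul0r addr0 [in RHS]ipC ipDr ip_avg mv mul0r addr0.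
by rewrite ipC lap_sa.
Qed.

Lemma coord_derive (R : realType) n (a : R -> 'rV[R]_n) (t : R) (da : 'rV[R]_n) i :
  is_derive t (1:R) a da -> is_derive t (1:R) (fun x => a x 0 i) (da 0 i).
Proof.
move=> [da1 <-]; apply: DeriveDef.
  by move/derivable_mxP: da1; apply.
by rewrite derive_mx // mxE.
Qed.

Lemma is_derive_ext (R : realType) (f g : R -> R) x df :
  f =1 g -> is_derive x (1:R) f df -> is_derive x (1:R) g df.
Proof. by move=> fg; have -> : g = f by apply/funext => y; rewrite fg. Qed.

Definition good (R : realType) n (r gamma : R) (w : 'I_n -> 'I_n -> R)
  (a : R -> 'rV[R]_n) :=
  forall t, exists phi, is_phi r w (a t) phi /\
    is_derive t (1:R) a (- (lap r w (a t) + gamma *: phi)).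

Lemma ip_const (R : realType) n (r gamma : R) (w : 'I_n -> 'I_n -> R) a b :
  (forall i, 0 < deg w i) -> (forall i j, w i j = w j i) ->
  good r gamma w a -> good r gamma w b ->
  forall s t, ip r w (a t) (b (s - t)) = ip r w (a 0) (b s).
Proof.
move=> dpos wsym ha hb s t.
pose g x := ip r w (a x) (b (s - x)).
have D : forall x, is_derive x (1:R) g 0.
  move=> x.
  have [pa [hpa da]] := ha x; have [pb [hpb db]] := hb (s - x).
  set dA := - (lap r w (a x) + gamma *: pa) in da.
  set dB := - (lap r w (b (s - x)) + gamma *: pb) in db.
  have hs : is_derive x (1:R) (fun y => s - y) (-1).
    apply: (is_derive_ext (f := cst s - id)) => [y //|].
    by rewrite -[-1]add0r; apply: is_deriveB.
  have Hi : forall i : 'I_n, is_derive x (1:R)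
      (fun y => powR (deg w i) r * (a y 0 i * b (s - y) 0 i))
      (powR (deg w i) r * (a x 0 i * (dB 0 i * -1) + b (s - x) 0 i * dA 0 i)).
    move=> i.
    have hb' : is_derive x (1:R) (fun y => b (s - y) 0 i) (dB 0 i * -1).
      apply: (is_derive_ext (f := (fun z => b z 0 i) \o (fun y => s - y))) => [y //|].
      by apply: is_derive1_comp => //; apply: coord_derive.
    have ha' := coord_derive i da.
    apply: (is_derive_ext (f := cst (powR (deg w i) r) * ((fun y => a y 0 i) * (fun y => b (s - y) 0 i)))) => [y //|].
    have := is_deriveM (is_derive_cst (powR (deg w i) r) x 1) (is_deriveM ha' hb').
    by rewrite scaler0 addr0 /=.
  have := is_derive_sum Hi.
  rewrite fct_sumE => HS.
  apply: (is_derive_ext (f := fun x => \sum_(i < n) powR (deg w i) r * (a x 0 i * b (s - x) 0 i))) => [y //|].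
  suff E0 : \sum_(i < n) powR (deg w i) r * (a x 0 i * (dB 0 i * -1) + b (s - x) 0 i * dA 0 i) = 0 by rewrite E0 in HS.
  have -> : \sum_(i < n) powR (deg w i) r * (a x 0 i * (dB 0 i * -1) + b (s - x) 0 i * dA 0 i)
      = ip r w (a x) (- dB) + ip r w dA (b (s - x)).
    rewrite /ip -big_split; apply: eq_bigr => i _; rewrite !mxE /=; ring.
  rewrite /dA /dB opprK [ip r w (- _) _]ipC ipNr !ipDr !ipZr.
  rewrite [ip r w (b _) (lap _ _ _)]ipC (lap_sa r _ _ dpos wsym) [ip r w (b _) pa]ipC (phi_sa dpos wsym hpa hpb).
  by rewrite subrr.
have := is_derive_0_is_cst t 0 D.
by rewrite /g subr0.
Qed.

Lemma ipBl (R : realType) n (r : R) w (u1 u2 v : 'rV[R]_n) :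
  ip r w (u1 - u2) v = ip r w u1 v - ip r w u2 v.
Proof. by rewrite ipC ipBr ipC [ip _ _ v _]ipC. Qed.

Lemma ipZl (R : realType) n (r : R) w (u v : 'rV[R]_n) k :
  ip r w (k *: u) v = k * ip r w u v.
Proof. by rewrite ipC ipZr ipC. Qed.

Lemma deg_pos (R : realType) n (w : 'I_n -> 'I_n -> R) :
  is_weighted_graph w -> forall i, 0 < deg w i.
Proof.
move=> [h2 [hsym [hnn [hdiag hconn]]]] i.
have h0 : (0 < n)%N by apply: leq_trans h2.
pose j0 : 'I_n := Ordinal h0.
pose j1 : 'I_n := Ordinal h2.
pose j := if i == j0 then j1 else j0.
have ji : j != i.
  rewrite /j; have [->|ne] := eqVneq i j0; last by rewrite eq_sym.
  by apply/eqP => /(congr1 val).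
have /connectP [p pth jl] := hconn i j.
case: p pth jl => [|x p] /=; first by move=> _ E; rewrite E eqxx in ji.
move=> /andP [ex _] _.
rewrite /deg (bigD1 x) //=; apply: (lt_le_trans ex).
by rewrite lerDl; apply: sumr_ge0 => k _.
Qed.

Lemma sumc_pos (R : realType) n (r : R) (w : 'I_n -> 'I_n -> R) :
  is_weighted_graph w -> 0 < \sum_j powR (deg w j) r.
Proof.
move=> hG; have dpos := deg_pos hG.
have h0 : (0 < n)%N by case: hG => h2 _; apply: leq_trans h2.
rewrite (bigD1 (Ordinal h0)) //=; apply: (lt_le_trans (powR_gt0 r (dpos (Ordinal h0)))).
by rewrite lerDl; apply: sumr_ge0 => k _; apply: powR_ge0.
Qed.

Lemma good_one (R : realType) n (r gamma : R) (w : 'I_n -> 'I_n -> R) :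
  is_weighted_graph w -> good r gamma w (fun _ => const_mx 1).
Proof.
move=> hG t; exists 0.
have L1 : lap r w (const_mx 1) = 0.
  by apply/rowP => i; rewrite !mxE big1 ?mulr0 // => j _; rewrite !mxE subrr mulr0.
have L0 : lap r w 0 = 0.
  by apply/rowP => i; rewrite !mxE big1 ?mulr0 // => j _; rewrite !mxE subrr mulr0.
split; first split.
- rewrite L0; apply/esym/eqP; rewrite subr_eq0; apply/eqP/rowP => i; rewrite !mxE.
  have -> : mass r w (const_mx 1) = \sum_j powR (deg w j) r.
    by apply: eq_bigr => j _; rewrite mxE mulr1.
  by rewrite divff // gt_eqF // sumc_pos.
- by rewrite /mass big1 // => i _; rewrite mxE mulr0.
- rewrite L1 scaler0 addr0 oppr0; exact: is_derive_cst.
Qed.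

Lemma uniq_sol (R : realType) n (r gamma : R) (w : 'I_n -> 'I_n -> R) a b t :
  is_weighted_graph w -> good r gamma w a -> good r gamma w b -> a 0 = b 0 ->
  a t = b t.
Proof.
move=> hG ha hb e0.
have dpos := deg_pos hG.
have wsym : forall i j, w i j = w j i by case: hG => _ [].
have C := fun x y (hx : good r gamma w x) (hy : good r gamma w y) =>
  ip_const dpos wsym hx hy (t + t) t.
have Caa := C _ _ ha ha; have Cab := C _ _ ha hb.
have Cba := C _ _ hb ha; have Cbb := C _ _ hb hb.
rewrite addrK in Caa Cab Cba Cbb.
have N : ip r w (a t - b t) (a t - b t) = 0.
  rewrite ipBl !ipBr Caa Cab Cba Cbb e0; ring.
apply/rowP => i.
have : powR (deg w i) r * ((a t - b t) 0 i * (a t - b t) 0 i) == 0.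
  apply/eqP; apply: (psumr_eq0P _ N) => // k _.
  by rewrite -expr2 mulr_ge0 ?powR_ge0 ?sqr_ge0.
rewrite mulf_eq0 gt_eqF ?powR_gt0 //= mulf_eq0 orbb !mxE subr_eq0.
by move/eqP.
Qed.

Lemma ip_ge0 (R : realType) n (r : R) w (x : 'rV[R]_n) : 0 <= ip r w x x.
Proof. by apply: sumr_ge0 => i _; rewrite -expr2 mulr_ge0 ?powR_ge0 ?sqr_ge0. Qed.

Lemma term_le0 (R : realType) (A x y : R) (bS bS' : bool) :
  bS' = (2^-1 <= A) ->
  x = (if bS then 1 else 0) -> y = (if bS' then 1 else 0) ->
  (1 - 2 * A) * (y - x) <= 0 /\ (bS -> ~~ bS' -> (1 - 2 * A) * (y - x) < 0).
Proof.
move=> hb -> ->.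
case: bS; case: bS' hb => /esym hb; split => //; try (move/negbT: hb; rewrite -ltNge => hb);
  rewrite ?subrr ?mulr0 ?sub0r ?subr0 ?mulr1 ?mulrN1 // ; try nra.
all: try (move=> _ _; nra).
Qed.

Lemma step_J (R : realType) n (r gamma tau : R) (w : 'I_n -> 'I_n -> R)
  (a b : R -> 'rV[R]_n) (S S' : {set 'I_n}) :
  is_weighted_graph w -> good r gamma w a -> good r gamma w b ->
  a 0 = chi R S -> b 0 = chi R S' -> S' = [set i | 2^-1 <= a tau 0 i] ->
  ip r w (const_mx 1 - chi R S') (b tau) <= ip r w (const_mx 1 - chi R S) (a tau) /\
  (ip r w (const_mx 1 - chi R S') (b tau) = ip r w (const_mx 1 - chi R S) (a tau) ->
   S \subset S').
Proof.
move=> hG ha hb a0 b0 hS'.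
have dpos := deg_pos hG.
have wsym : forall i j, w i j = w j i by case: hG => _ [].
have ho := good_one r gamma hG.
set A := a tau; set B := b tau; set X := chi R S; set Y := chi R S'.
set O := const_mx 1 : 'rV[R]_n.
have F1 : ip r w X B = ip r w A Y.
  have := ip_const dpos wsym ha hb tau tau; rewrite subrr b0 a0 => ->.
  by [].
have F2 : ip r w O B = ip r w O Y.
  by have := ip_const dpos wsym ho hb tau tau; rewrite subrr b0.
have F3 : ip r w O A = ip r w O X.
  by have := ip_const dpos wsym ho ha tau tau; rewrite subrr a0.
have eh : tau - tau / 2 = tau / 2 by rewrite {1}(splitr tau) addrK.
have C := fun x y (hx : good r gamma w x) (hy : good r gamma w y) =>
  ip_const dpos wsym hx hy tau (tau / 2).
have Caa := C _ _ ha ha; have Cab := C _ _ ha hb.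
have Cba := C _ _ hb ha; have Cbb := C _ _ hb hb.
rewrite eh a0 b0 in Caa Cab Cba Cbb.
have Qn := ip_ge0 r w (a (tau / 2) - b (tau / 2)).
rewrite ipBl !ipBr Caa Cab Cba Cbb -/A -/B -/X -/Y in Qn.
have HP : forall i, (1 - 2 * A 0 i) * (Y 0 i - X 0 i) <= 0 /\
    (i \in S -> i \notin S' -> (1 - 2 * A 0 i) * (Y 0 i - X 0 i) < 0).
  move=> i; apply: term_le0; first by rewrite hS' inE.
    by rewrite /X mxE.
  by rewrite /Y mxE.
pose P := \sum_i powR (deg w i) r * ((1 - 2 * A 0 i) * (Y 0 i - X 0 i)).
have PE : P = ip r w O Y - ip r w O X - 2 * ip r w A Y + 2 * ip r w A X.
  rewrite /P /ip -!sumrB mulr_sumr mulr_sumr -!sumrB -big_split /=.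
  by apply: eq_bigr => i _; rewrite !mxE /=; ring.
have Pn : P <= 0.
  by apply: sumr_le0 => i _; apply: mulr_ge0_le0; [exact: powR_ge0 | case: (HP i)].
have E1 : ip r w X A = ip r w A X by rewrite ipC.
have E2 : ip r w Y A = ip r w A Y by rewrite ipC.
rewrite E1 E2 in Qn.
rewrite (ipBl r w O Y B) (ipBl r w O X A).
split; first lra.
move=> EJ.
have P0 : P = 0 by lra.
apply/fintype.subsetP => i iS; apply/negPn/negP => iS'.
have := (HP i).2 iS iS'.
have Z : - (powR (deg w i) r * ((1 - 2 * A 0 i) * (Y 0 i - X 0 i))) = 0.
  apply: (@psumr_eq0P _ _ predT (fun i => - (powR (deg w i) r * ((1 - 2 * A 0 i) * (Y 0 i - X 0 i))))) => //.
    move=> k _; rewrite oppr_ge0; apply: mulr_ge0_le0; [exact: powR_ge0 | by case: (HP k)].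
  by rewrite sumrN -/P P0 oppr0.
move/eqP: Z; rewrite oppr_eq0 mulf_eq0 gt_eqF ?powR_gt0 //= => /eqP ->.
by rewrite ltxx.
Qed.

From mathcomp Require Import zify.
Unset Implicit Arguments.

Theorem corollary5p7 (R : realType) (n : nat) (w : 'I_n -> 'I_n -> R)
  (hG : is_weighted_graph w) (r gamma tau : R)
  (hr : 0 <= r <= 1) (hgamma : 0 <= gamma) (htau : 0 < tau)
  (S : nat -> {set 'I_n})
  (hS : forall k, okmbo_step r gamma tau w (S k) (S k.+1)) :
  exists K : nat, forall k : nat, (K <= k)%N -> S k = S K.
Proof.
pose U k := sval (cid (hS k)).
have HU : forall k, [/\ U k 0 = chi R (S k), good r gamma w (U k) &
    S k.+1 = [set i | 2^-1 <= U k tau 0 i]].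
  by move=> k; case: (svalP (cid (hS k))) => [h1 [h2 h3]]; split.
pose J k := ip r w (const_mx 1 - chi R (S k)) (U k tau).
have st : forall k, J k.+1 <= J k /\ (J k.+1 = J k -> S k \subset S k.+1).
  move=> k; have [a0 ga ea] := HU k; have [b0 gb eb] := HU k.+1.
  exact: (step_J hG ga gb a0 b0 ea).
have Jmono : forall m d, J (m + d)%N <= J m.
  move=> m; elim=> [|d IH]; first by rewrite addn0.
  by rewrite addnS; apply: le_trans IH; case: (st (m + d)%N).
have Uuniq : forall j k, S j = S k -> U j tau = U k tau.
  move=> j k E; have [a0 ga _] := HU j; have [b0 gb _] := HU k.
  by apply: (uniq_sol tau hG ga gb); rewrite a0 b0 E.
have Snext : forall j k, S j = S k -> S j.+1 = S k.+1.
  move=> j k E; have [_ _ ->] := HU j; have [_ _ ->] := HU k.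
  by rewrite (Uuniq _ _ E).
have [j [k [jk Ejk]]] : exists j k, (j < k)%N /\ S j = S k.
  apply: contrapT => H.
  pose f (i : 'I_(#|{set 'I_n}|.+1)) := S i.
  have inj : injective f.
    move=> x y fxy; apply: val_inj; case: (ltngtP x y) => // h; exfalso; apply: H.
      by exists x, y.
    by exists y, x.
  by have := leq_card f inj; rewrite card_ord ltnn.
have Jjk : J k = J j by rewrite /J Ejk (Uuniq _ _ Ejk).
have Sub : forall m, (j <= m)%N -> (m < k)%N -> S m \subset S m.+1.
  move=> m jm mk; apply: (st m).2; apply/le_anti; rewrite (st m).1 /=.
  have h1 := Jmono m.+1 (k - m.+1)%N; rewrite subnKC // in h1.
  have h2 := Jmono j (m - j)%N; rewrite subnKC // in h2.
  by rewrite Jjk in h1; apply: le_trans h2 h1.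
have Sjk : forall d, (d < k - j)%N -> S j.+1 \subset S (j + d).+1.
  elim=> [|d IH] hd; first by rewrite addn0.
  apply: fintype.subset_trans (IH (ltnW hd)) _.
  rewrite addnS; apply: Sub; lia.
have Sj1 : S j.+1 = S j.
  apply/eqP; rewrite finset.eqEsubset; apply/andP; split.
    have := Sjk (k - j).-1 ltac:(lia).
    have -> : (j + (k - j).-1).+1 = k by lia.
    by rewrite Ejk.
  by apply: Sub.
exists j => m jm.
rewrite -(subnKC jm); elim: (m - j)%N => [|d IH]; first by rewrite addn0.
by rewrite addnS (Snext _ _ IH) Sj1.
Qed.
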